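(* For every relation $\mathcal{R}$ on distributions, $Cv(b(\mathcal{R})) \subseteq b(Cv(\mathcal{R}))$, i.e. $Cv$ is $b$-compatible.
   Context: $Cv(\mathcal{R})$ is the convex hull of a relation $\mathcal{R}$ on distributions: the set of pairs $(\sum_{i\in I} p_i\cdot\Delta_i, \sum_{i\in I} p_i\cdot\Theta_i)$ with $\Delta_i \mathcal{R} \Theta_i$ for all $i$ and $\sum_i p_i = 1$. $b$ is the monotone function on relations whose greatest fixed point is constrained saturated bisimilarity: $(\Delta,\Theta) \in b(\mathcal{R})$ iff $\Delta$ and $\Theta$ satisfy the same barbs ($\downarrow_c^p$: total probability $p$ of configurations ready to output on free channel $c$; $\downarrow_\bot^p$: probability $p$ of deadlock $\bot$), and for every context $O[\cdot]$, whenever $O[\Delta] \rightsquigarrow_\pi \Delta'$ there is $\Theta'$ with $O[\Theta] \rightsquigarrow_\pi \Theta'$ and $\Delta'\mathcal{R}\Theta'$, and symmetrically. Here distributions are over lqCCS extended configurations $\langle\!\langle \rho, P, R \rangle\!\rangle$ (density operator, process, observer) and $\bot$; contexts $O[\cdot] = [\cdot] \parallel R'$ add an observer $R'$; $\rightsquigarrow_\pi$ is the enhanced semantics with index $\pi = \diamond$ (process moves) or $\pi \in \{\ell,r\}^*$ (observer component moves), lifted to distributions by linearity, and it is left-decomposable: if $\sum_i p_i\cdot\Delta_i \rightsquigarrow_\pi \Delta'$ then $\Delta' = \sum_i p_i\cdot\Delta_i'$ with $\Delta_i \rightsquigarrow_\pi \Delta_i'$. *)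

(* Defs.v *)
From HB Require Import structures.
From mathcomp Require Import all_boot all_order all_algebra.
From mathcomp Require Import boolp classical_sets functions cardinality fsbigop reals.

Set Implicit Arguments.
Unset Strict Implicit.
Unset Printing Implicit Defensive.
Import Order.TTheory GRing.Theory Num.Theory.
Local Open Scope classical_set_scope.
Local Open Scope ring_scope.

(* Extended configurations <<rho, P, R>> (density operator, process,         *)
(* observer) and the deadlock point bot.  A point of the state space is      *)
(* [Some (rho, P, R)] or [None] (= bot).                                     *)
Section Setting.
Variables (R : realType) (Dens Proc Obsv : choiceType).

Definition conf : choiceType := (Dens * Proc * Obsv)%type.
Definition xconf : choiceType := option conf.

Definition is_dist (f : xconf -> R) : Prop :=
  [/\ finite_set (f @^-1` [set~ 0]),
      (forall x, 0 <= f x) &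
      \sum_(x \in [set: xconf]) f x = 1].

Definition dist := {f : xconf -> R | is_dist f}.

Definition drel := dist -> dist -> Prop.

Definition Cv (Rel : drel) : drel := fun D T =>
  exists (n : nat) (p : 'I_n -> R) (Ds Ts : 'I_n -> dist),
    [/\ (forall i, 0 < p i),
        \sum_(i < n) p i = 1,
        (forall i, Rel (Ds i) (Ts i)),
        (forall x, proj1_sig D x = \sum_(i < n) p i * proj1_sig (Ds i) x) &
        (forall x, proj1_sig T x = \sum_(i < n) p i * proj1_sig (Ts i) x)].

Definition drel_sub (R1 R2 : drel) : Prop := forall D T, R1 D T -> R2 D T.

(* Barbs.  [ready c C] : configuration C is ready to output on the free
   channel c.  D |c^p : the total probability of configurations ready on c is
   p;  D |bot^p : the probability of bot is p. *)
Definition barb_chan (Chan : Type) (ready : Chan -> conf -> Prop)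
  (D : dist) (c : Chan) (p : R) : Prop :=
  p = \sum_(C \in [set C : conf | ready c C]) proj1_sig D (Some C).

Definition barb_bot (D : dist) (p : R) : Prop := p = proj1_sig D None.

(* Contexts O[.] = [.] || R' : they act on an extended configuration
   <<rho, P, R>> giving <<rho, P, R || R'>>, and fix bot. *)
Definition ctx_conf (par : Obsv -> Obsv -> Obsv) (R' : Obsv) (x : xconf)
  : xconf :=
  match x with
  | Some (rho, P, Q) => Some (rho, P, par Q R')
  | None => None
  end.

(* O[D] = Do : Do is the image (pushforward) of D under the context. *)
Definition ctx_app (par : Obsv -> Obsv -> Obsv) (R' : Obsv) (D Do : dist)
  : Prop :=
  forall y, proj1_sig Do y =
    \sum_(x \in [set x | ctx_conf par R' x = y]) proj1_sig D x.

End Setting.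

(* Indices of the enhanced semantics: diamond (process moves) or a path in
   {l, r}^* (observer component moves). *)
Inductive side := Sl | Sr.
Inductive idx := Diamond | Path of seq side.

Section Sem.
Variables (R : realType) (Dens Proc Obsv : choiceType) (Chan : Type).
Variables (par : Obsv -> Obsv -> Obsv) (ready : Chan -> conf Dens Proc Obsv -> Prop).
Variable (step : idx -> dist R Dens Proc Obsv -> dist R Dens Proc Obsv -> Prop).

Local Notation dist := (dist R Dens Proc Obsv).

Definition step_linear : Prop :=
  forall pi (n : nat) (p : 'I_n -> R) (Ds Ds' : 'I_n -> dist) (D D' : dist),
    (forall i, 0 < p i) -> \sum_(i < n) p i = 1 ->
    (forall i, step pi (Ds i) (Ds' i)) ->
    (forall x, proj1_sig D x = \sum_(i < n) p i * proj1_sig (Ds i) x) ->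
    (forall x, proj1_sig D' x = \sum_(i < n) p i * proj1_sig (Ds' i) x) ->
    step pi D D'.

Definition step_left_decomposable : Prop :=
  forall pi (n : nat) (p : 'I_n -> R) (Ds : 'I_n -> dist) (D D' : dist),
    (forall i, 0 < p i) -> \sum_(i < n) p i = 1 ->
    (forall x, proj1_sig D x = \sum_(i < n) p i * proj1_sig (Ds i) x) ->
    step pi D D' ->
    exists Ds' : 'I_n -> dist,
      (forall i, step pi (Ds i) (Ds' i)) /\
      (forall x, proj1_sig D' x = \sum_(i < n) p i * proj1_sig (Ds' i) x).

(* The monotone function b whose greatest fixed point is constrained
   saturated bisimilarity. *)
Definition b (Rel : drel R Dens Proc Obsv) : drel R Dens Proc Obsv :=
  fun D T =>
  [/\ (forall c p, barb_chan ready D c p <-> barb_chan ready T c p),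
      (forall p, barb_bot D p <-> barb_bot T p),
      (forall (R' : Obsv) pi (Do D' : dist),
          ctx_app par R' D Do -> step pi Do D' ->
          exists (To T' : dist), [/\ ctx_app par R' T To, step pi To T' & Rel D' T']) &
      (forall (R' : Obsv) pi (To T' : dist),
          ctx_app par R' T To -> step pi To T' ->
          exists (Do D' : dist), [/\ ctx_app par R' D Do, step pi Do D' & Rel D' T'])].

End Sem.

(* Main.v *)
Require Import Defs.
From HB Require Import structures.
From mathcomp Require Import all_boot all_order all_algebra.
From mathcomp Require Import finmap.
From mathcomp Require Import boolp classical_sets functions cardinality fsbigop reals.

Set Implicit Arguments.
Unset Strict Implicit.
Unset Printing Implicit Defensive.
Import Order.TTheory GRing.Theory Num.Theory.
Local Open Scope classical_set_scope.
Local Open Scope ring_scope.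

Section Aux.
Variable R : realType.

Definition supp (T : choiceType) (f : T -> R) : {fset T} :=
  fset_set (f @^-1` [set~ 0]).

Lemma supp0 (T : choiceType) (f : T -> R) x :
  finite_set (f @^-1` [set~ 0]) -> x \notin supp f -> f x = 0.
Proof.
move=> fin; apply: contraNeq => fx0.
by rewrite /supp in_fset_set // inE /=; apply/eqP.
Qed.

Lemma fsum_fset (T : choiceType) (S : {fset T}) (A : set T) (f : T -> R) :
  (forall x, x \notin S -> f x = 0) ->
  \sum_(x \in A) f x = \sum_(x <- S) (if x \in A then f x else 0).
Proof.
move=> Hs; rewrite fsbig_mkcond (fsbigTE S) //.
by move=> x xS; rewrite /patch; case: ifP => // _; rewrite Hs.
Qed.

Lemma fsum_lin (T : choiceType) n (p : 'I_n -> R) (g : 'I_n -> T -> R)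
  (f : T -> R) (A : set T) :
  (forall i, finite_set (g i @^-1` [set~ 0])) ->
  (forall x, f x = \sum_(i < n) p i * g i x) ->
  \sum_(x \in A) f x = \sum_(i < n) p i * \sum_(x \in A) g i x.
Proof.
move=> fin hf.
pose S := (\bigcup_(i <- enum 'I_n) supp (g i))%fset.
have gS : forall i x, x \notin S -> g i x = 0.
  move=> i x xS; apply: supp0 => //; apply: contra xS => xi.
  by apply/bigfcupP; exists i => //; rewrite mem_enum.
rewrite (fsum_fset _ (S := S)); last first.
  by move=> x xS; rewrite hf big1 // => i _; rewrite gS // mulr0.
rewrite (eq_bigr (fun i => \sum_(x <- S) p i * (if x \in A then g i x else 0))); last first.
  by move=> i _; rewrite (fsum_fset _ (S := S)) ?mulr_sumr // => x; apply: gS.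
rewrite exchange_big /=; apply: eq_bigr => x _.
case: ifP => _; first by rewrite hf.
by rewrite big1 // => i _; rewrite mulr0.
Qed.

End Aux.

Section Dists.
Variables (R : realType) (Dens Proc Obsv : choiceType).
Local Notation dist := (dist R Dens Proc Obsv).
Local Notation xconf := (xconf Dens Proc Obsv).

Lemma dist_fin (D : dist) : finite_set (proj1_sig D @^-1` [set~ 0]).
Proof. by case: D => f []. Qed.

Lemma dist_ge0 (D : dist) x : 0 <= proj1_sig D x.
Proof. by case: D => f [] /=. Qed.

Lemma dist_sum1 (D : dist) : \sum_(x \in [set: xconf]) proj1_sig D x = 1.
Proof. by case: D => f [] /=. Qed.

Lemma cvx_dist n (p : 'I_n -> R) (Ds : 'I_n -> dist) :
  (forall i, 0 < p i) -> \sum_(i < n) p i = 1 ->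
  exists D : dist, forall x, proj1_sig D x = \sum_(i < n) p i * proj1_sig (Ds i) x.
Proof.
move=> hp hs.
pose F x := \sum_(i < n) p i * proj1_sig (Ds i) x.
have hd : is_dist F.
  split.
  - pose S := (\bigcup_(i <- enum 'I_n) supp (proj1_sig (Ds i)))%fset.
    apply: (finite_subfset S) => x /= Fx; apply: contra_notT Fx => xS.
    rewrite /F big1 // => i _; rewrite (@supp0 R _ (proj1_sig (Ds i))) ?mulr0 //; first exact: dist_fin.
    apply: contra xS => xi; by apply/bigfcupP; exists i => //; rewrite mem_enum.
  - by move=> x; apply: sumr_ge0 => i _; apply: mulr_ge0; [exact: ltW | exact: dist_ge0].
  - rewrite (@fsum_lin R _ n p (fun i => proj1_sig (Ds i))) //; last by move=> i; apply: dist_fin.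
    by under eq_bigr do rewrite dist_sum1 mulr1.
by exists (exist _ F hd).
Qed.

Lemma push_dist (h : xconf -> xconf) (D : dist) :
  exists Do : dist, forall y,
    proj1_sig Do y = \sum_(x \in [set x | h x = y]) proj1_sig D x.
Proof.
pose F y := \sum_(x \in [set x | h x = y]) proj1_sig D x.
pose S := supp (proj1_sig D).
pose S' := (h @` S)%fset.
have DS : forall x, x \notin S -> proj1_sig D x = 0.
  by move=> x; apply: supp0; apply: dist_fin.
have FS' : forall y, y \notin S' -> F y = 0.
  move=> y yS; rewrite /F fsbig1 // => x /= hxy; apply: DS.
  apply: contra yS => xS; rewrite -hxy; exact: in_imfset.
have FE : forall y, F y = \sum_(x <- S) (if h x == y then proj1_sig D x else 0).
  move=> y; rewrite /F (fsum_fset _ (S := S)) //; apply: eq_bigr => x _.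
  case: (h x =P y) => [e|ne]; [rewrite ifT // | rewrite ifF //].
    by rewrite inE.
  by apply/negP; rewrite inE.
have hd : is_dist F.
  split.
  - apply: (finite_subfset S') => y /= Fy; apply: contra_notT Fy => yS.
    exact: FS'.
  - by move=> y; apply: fsumr_ge0 => x _; apply: dist_ge0.
  - rewrite (fsbigTE S') //.
    under eq_bigr do rewrite FE.
    rewrite exchange_big /= -(dist_sum1 D) (fsbigTE S) //.
    apply: eq_big_seq => x xS; rewrite -big_mkcond /=.
    rewrite (eq_bigl (fun y => id y == h x)); last by move=> y; rewrite eq_sym.
    by rewrite (@fbig_pred1_inj _ _ _ _ _ (fun=> proj1_sig D x) id S' (h x)) // in_imfset.
by exists (exist _ F hd).
Qed.

End Dists.

Section Main.
Variables (R : realType) (Dens Proc Obsv : choiceType) (Chan : Type).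
Variables (par : Obsv -> Obsv -> Obsv) (ready : Chan -> conf Dens Proc Obsv -> Prop).
Variable (step : idx -> dist R Dens Proc Obsv -> dist R Dens Proc Obsv -> Prop).
Hypothesis Hlin : step_linear step.
Hypothesis Hldec : step_left_decomposable step.
Local Notation dist := (dist R Dens Proc Obsv).

Lemma sim_part (Q : drel R Dens Proc Obsv) n (p : 'I_n -> R) (Ds Ts : 'I_n -> dist)
  (D T : dist) :
  (forall i, 0 < p i) -> \sum_(i < n) p i = 1 ->
  (forall x, proj1_sig D x = \sum_(i < n) p i * proj1_sig (Ds i) x) ->
  (forall x, proj1_sig T x = \sum_(i < n) p i * proj1_sig (Ts i) x) ->
  (forall i (R' : Obsv) pi (Do D' : dist),
      ctx_app par R' (Ds i) Do -> step pi Do D' ->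
      exists (To T' : dist), [/\ ctx_app par R' (Ts i) To, step pi To T' & Q D' T']) ->
  forall (R' : Obsv) pi (Do D' : dist),
      ctx_app par R' D Do -> step pi Do D' ->
      exists (To T' : dist), [/\ ctx_app par R' T To, step pi To T' & Cv Q D' T'].
Proof.
move=> hp hs hD hT H R' pi Do D' hDo hst.
have /choice [Dos hDos] : forall i, exists Doi : dist, ctx_app par R' (Ds i) Doi.
  by move=> i; apply: push_dist.
have hDo_lin : forall y, proj1_sig Do y = \sum_(i < n) p i * proj1_sig (Dos i) y.
  move=> y; rewrite hDo (@fsum_lin R _ n p (fun i => proj1_sig (Ds i)) (proj1_sig D)).
  - by apply: eq_bigr => i _; rewrite hDos.
  - by move=> i; apply: dist_fin.
  - exact: hD.
have [D's [hst' hD']] := Hldec hp hs hDo_lin hst.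
have /choice [Tos H1] : forall i, exists To : dist, exists T' : dist,
    [/\ ctx_app par R' (Ts i) To, step pi To T' & Q (D's i) T'].
  by move=> i; apply: (H i R' pi _ _ (hDos i) (hst' i)).
have /choice [T's H2] := H1.
have [To hTo] := push_dist (ctx_conf par R') T.
have [T' hT'] := cvx_dist T's hp hs.
exists To, T'; split.
- exact: hTo.
- apply: (Hlin hp hs (Ds := Tos) (Ds' := T's)) => //.
  + by move=> i; case: (H2 i).
  + move=> y; rewrite hTo (@fsum_lin R _ n p (fun i => proj1_sig (Ts i)) (proj1_sig T)).
    * by apply: eq_bigr => i _; case: (H2 i) => -> _ _.
    * by move=> i; apply: dist_fin.
    * exact: hT.
- exists n, p, D's, T's; split => // i; by case: (H2 i).
Qed.

End Main.

Theorem lemmaC7 (R : realType) (Dens Proc Obsv : choiceType) (Chan : Type)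
  (par : Obsv -> Obsv -> Obsv) (ready : Chan -> conf Dens Proc Obsv -> Prop)
  (step : idx -> dist R Dens Proc Obsv -> dist R Dens Proc Obsv -> Prop)
  (Hlin : step_linear step)
  (Hldec : step_left_decomposable step)
  (Rel : drel R Dens Proc Obsv) :
  drel_sub (Cv (b par ready step Rel)) (b par ready step (Cv Rel)).
Proof.
move=> D T [n [p [Ds [Ts [hp hs hb hD hT]]]]]; split.
- move=> c q; rewrite /barb_chan.
  have fin : forall E : dist R Dens Proc Obsv,
      finite_set ((fun C => proj1_sig E (Some C)) @^-1` [set~ 0]).
    move=> E; have := @finite_preimage _ _ (proj1_sig E @^-1` [set~ 0]) Some.
    by apply; [move=> a b _ _ [] | exact: dist_fin].
  rewrite (@fsum_lin R _ n p (fun i C => proj1_sig (Ds i) (Some C))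
     (fun C => proj1_sig D (Some C))); last (by move=> x; rewrite hD); last by move=> i; apply: fin.
  rewrite (@fsum_lin R _ n p (fun i C => proj1_sig (Ts i) (Some C))
     (fun C => proj1_sig T (Some C))); last (by move=> x; rewrite hT); last by move=> i; apply: fin.
  match goal with |- (_ = ?A <-> _ = ?B) => have -> : A = B; last by [] end.
  apply: eq_bigr => i _; congr (_ * _).
  by case: (hb i) => hc _ _ _; apply: (proj1 (hc c _)).
- move=> q; rewrite /barb_bot hD hT.
  match goal with |- (_ = ?A <-> _ = ?B) => have -> : A = B; last by [] end.
  apply: eq_bigr => i _; congr (_ * _).
  by case: (hb i) => _ hbot _ _; apply: (proj1 (hbot _)).
- move=> R' pi Do D' h1 h2.
  apply: (sim_part Hlin Hldec hp hs hD hT _ h1 h2).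
  by move=> i; case: (hb i).
- move=> R' pi To T' hTo hst.
  have := sim_part Hlin Hldec (Q := fun a b => Rel b a) hp hs hT hD _ hTo hst.
  case.
    move=> i R'' pi' Do' D'' h1 h2; case: (hb i) => _ _ _ h4.
    have [Do0 [D0 [? ? ?]]] := h4 R'' pi' Do' D'' h1 h2.
    by exists Do0, D0.
  move=> Do [D' [h1 h2 [m [q [As [Bs [? ? ? ? ?]]]]]]].
  exists Do, D'; split => //.
  by exists m, q, Bs, As; split.
Qed.
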